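(* Let $G$ be a group with a finite-index normal subgroup $A\cong\mathbb{Z}^2$. Suppose there is $g\in G$ such that the automorphism $a\mapsto g^{-1}ag$ of $A$ is neither the identity map nor the inversion map. Then $G$ has quadratic automorphic growth.
   Context: For a finitely generated group $G$ with finite generating set $\Sigma$, the automorphic growth function sends $n$ to the number of $\operatorname{Aut}(G)$-orbits of $G$ containing an element of word length at most $n$. Quadratic means it is $\sim$-equivalent to $n\mapsto n^2$, where $f\sim g$ iff $f\preccurlyeq g$ and $g\preccurlyeq f$, and $f\preccurlyeq g$ means there is $\lambda\in\mathbb{N}\setminus\{0\}$ with $f(n)\le\lambda g(\lambda n+\lambda)+\lambda$ for all $n$ (this is independent of $\Sigma$). *)

(* Defs.v *)
From mathcomp Require Import all_boot all_algebra finmap.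
From mathcomp Require Import classical_sets cardinality boolp.
From Stdlib Require List.

Set Implicit Arguments. Unset Strict Implicit. Unset Printing Implicit Defensive.

Local Open Scope classical_set_scope.
Local Open Scope fset_scope.

Record group := Group {
  gcar :> Type;
  gmul : gcar -> gcar -> gcar;
  ginv : gcar -> gcar;
  gone : gcar;
  gmulA : forall x y z, gmul x (gmul y z) = gmul (gmul x y) z;
  gmul1l : forall x, gmul gone x = x;
  gmulVl : forall x, gmul (ginv x) x = gone }.

Arguments gmul {g}.
Arguments ginv {g}.
Arguments gone {g}.

Section GroupDefs.
Variable G : group.

Definition is_hom (f : G -> G) : Prop :=
  forall x y, f (gmul x y) = gmul (f x) (f y).

Definition is_aut (f : G -> G) : Prop := is_hom f /\ bijective f.

Definition aut_orbit (x : G) : set G := [set y | exists f, is_aut f /\ f x = y].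

Definition is_subgroup (A : set G) : Prop :=
  A gone /\ (forall x y, A x -> A y -> A (gmul x y)) /\ (forall x, A x -> A (ginv x)).

Definition is_normal (A : set G) : Prop :=
  is_subgroup A /\ forall g a, A a -> A (gmul (gmul (ginv g) a) g).

Definition finite_index (A : set G) : Prop :=
  exists R : seq G, forall g, exists2 r, List.In r R & exists2 a, A a & g = gmul r a.

Definition zadd2 (p q : int * int) : int * int := ((p.1 + q.1)%R, (p.2 + q.2)%R).

Definition iso_Z2 (A : set G) : Prop :=
  exists phi : int * int -> G,
    (forall p q, phi (zadd2 p q) = gmul (phi p) (phi q)) /\
    injective phi /\ (forall x, A x <-> exists p, phi p = x).

Definition gen_letter (S : seq G) (s : G) : Prop :=
  exists2 t, List.In t S & (s = t \/ s = ginv t).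

Definition word_value (l : seq G) : G := foldr (@gmul G) (@gone G) l.

Definition in_ball (S : seq G) (n : nat) (x : G) : Prop :=
  exists l : seq G, List.Forall (gen_letter S) l /\ (size l <= n)%N /\ word_value l = x.

Definition generates (S : seq G) : Prop := forall x, exists n, in_ball S n x.

Definition aut_growth (S : seq G) (n : nat) : nat :=
  #|` fset_set [set O : set G | exists x, in_ball S n x /\ O = aut_orbit x] |.

End GroupDefs.

Definition growth_preceq (f g : nat -> nat) : Prop :=
  exists lam : nat, (0 < lam)%N /\ forall n, (f n <= lam * g (lam * n + lam) + lam)%N.

Definition growth_equiv (f g : nat -> nat) : Prop :=
  growth_preceq f g /\ growth_preceq g f.

Definition quadratic_aut_growth (G : group) : Prop :=
  (exists S : seq G, generates S) /\
  forall S : seq G, generates S -> growth_equiv (aut_growth S) (fun n => (n ^ 2)%N).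

(* Main.v *)
Require Import Defs.
From mathcomp Require Import all_boot all_order all_algebra finmap.
From mathcomp Require Import classical_sets cardinality boolp.
From mathcomp Require Import zify ring lra.
From Stdlib Require Import Classical ClassicalEpsilon.
Set Implicit Arguments. Unset Strict Implicit. Unset Printing Implicit Defensive.

Module GrpM.
Import GRing.Theory Num.Theory.

Section GroupLemmas.
Variable G : group.
Implicit Types x y z : G.
Local Notation "x * y" := (gmul x y).
Local Notation "x ^-1" := (ginv x).
Local Notation "1" := (@gone G).

Lemma gmulV x : x * x^-1 = 1.
Proof.
rewrite -{1}(gmul1l (x * x^-1)) -{1}(gmulVl (x^-1)).
rewrite -gmulA (gmulA (x^-1)) gmulVl gmul1l gmulVl //.
Qed.

Lemma gmul1r x : x * 1 = x.
Proof. by rewrite -(gmulVl x) gmulA gmulV gmul1l. Qed.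

Lemma gmulKl x y : x^-1 * (x * y) = y.
Proof. by rewrite gmulA gmulVl gmul1l. Qed.

Lemma gmulKVl x y : x * (x^-1 * y) = y.
Proof. by rewrite gmulA gmulV gmul1l. Qed.

Lemma gmulKr x y : (y * x) * x^-1 = y.
Proof. by rewrite -gmulA gmulV gmul1r. Qed.

Lemma gmulKVr x y : (y * x^-1) * x = y.
Proof. by rewrite -gmulA gmulVl gmul1r. Qed.

Lemma gmul_cancl x y z : x * y = x * z -> y = z.
Proof. by move=> e; rewrite -(gmulKl x y) e gmulKl. Qed.

Lemma gmul_cancr x y z : y * x = z * x -> y = z.
Proof. by move=> e; rewrite -(gmulKr x y) e gmulKr. Qed.

Lemma ginv_uniq x y : x * y = 1 -> y = x^-1.
Proof. by move=> e; apply: (gmul_cancl (x:=x)); rewrite e gmulV. Qed.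

Lemma ginvK x : (x^-1)^-1 = x.
Proof. by symmetry; apply: ginv_uniq; rewrite gmulVl. Qed.

Lemma ginvM x y : (x * y)^-1 = y^-1 * x^-1.
Proof. by symmetry; apply: ginv_uniq; rewrite -gmulA gmulKVl gmulV. Qed.

Lemma ginv1 : (1 : G)^-1 = 1.
Proof. by symmetry; apply: ginv_uniq; rewrite gmul1l. Qed.

Fixpoint gpow x (n : nat) : G := if n is n'.+1 then x * gpow x n' else 1.

Lemma gpowD x m n : gpow x (m + n) = gpow x m * gpow x n.
Proof. by elim: m => [|m IH] /=; rewrite ?gmul1l // IH gmulA. Qed.

Lemma gpowS' x n : gpow x n.+1 = gpow x n * x.
Proof. by rewrite -addn1 gpowD /= gmul1r. Qed.

Lemma gpowM x m n : gpow x (m * n) = gpow (gpow x m) n.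
Proof.
elim: n => [|n IH]; first by rewrite muln0.
by rewrite mulnS gpowD IH.
Qed.

Lemma ginv_pow x n : (gpow x n)^-1 = gpow (x^-1) n.
Proof.
elim: n => [|n IH] /=; first exact: ginv1.
by rewrite ginvM IH -gpowS'.
Qed.

Lemma word_value_cat (l1 l2 : seq G) :
  word_value (l1 ++ l2) = word_value l1 * word_value l2.
Proof. by elim: l1 => [|a l IH] /=; rewrite ?gmul1l // IH gmulA. Qed.

Lemma in_ball0 (S : seq G) : in_ball S 0 1.
Proof. by exists [::]. Qed.

Lemma in_ball_mul (S : seq G) m n x y : in_ball S m x -> in_ball S n y -> in_ball S (m + n) (x * y).
Proof.
move=> [l1 [F1 [s1 v1]]] [l2 [F2 [s2 v2]]]; exists (l1 ++ l2); split.
  by apply List.Forall_app.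
by rewrite size_cat leq_add // word_value_cat v1 v2.
Qed.

Lemma in_ball_mono (S : seq G) m n x : (m <= n)%N -> in_ball S m x -> in_ball S n x.
Proof. by move=> le [l [F [s v]]]; exists l; split=> //; split=> //; apply: leq_trans le. Qed.

Lemma in_ball_pow (S : seq G) m x k : in_ball S m x -> in_ball S (k * m) (gpow x k).
Proof.
move=> b; elim: k => [|k IH]; first by rewrite mul0n; apply in_ball0.
by rewrite mulSn /=; apply: in_ball_mul.
Qed.

Lemma in_ball_letter (S : seq G) s : gen_letter S s -> in_ball S 1 s.
Proof. move=> h; exists [:: s]; split; first by constructor. by rewrite /= gmul1r. Qed.

End GroupLemmas.

Section Hom.
Variable G : group.
Variable f : G -> G.
Hypothesis hf : is_hom f.

Lemma hom1 : f gone = gone.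
Proof.
apply: (@gmul_cancl _ (f gone)); rewrite -hf gmul1l gmul1r //.
Qed.

Lemma homV x : f (ginv x) = ginv (f x).
Proof. apply: ginv_uniq; by rewrite -hf gmulV hom1. Qed.

Lemma hom_pow x n : f (gpow x n) = gpow (f x) n.
Proof. elim: n => [|n IH] /=; first exact hom1. by rewrite hf IH. Qed.
End Hom.

End GrpM.
Import GrpM.

Module MatM.
Import Order.TTheory GRing.Theory Num.Theory.
Local Open Scope ring_scope.

Record mat := Mat { m11 : int; m12 : int; m21 : int; m22 : int }.
Definition vec := (int * int)%type.
Definition mapp (M : mat) (v : vec) : vec :=
  (m11 M * v.1 + m12 M * v.2, m21 M * v.1 + m22 M * v.2).
Definition mmul (M P : mat) : mat :=
  Mat (m11 M * m11 P + m12 M * m21 P) (m11 M * m12 P + m12 M * m22 P)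
      (m21 M * m11 P + m22 M * m21 P) (m21 M * m12 P + m22 M * m22 P).
Definition mI := Mat 1 0 0 1.
Definition msc (k : int) := Mat k 0 0 k.
Definition mneg (M : mat) := Mat (- m11 M) (- m12 M) (- m21 M) (- m22 M).
Definition mpow (M : mat) (n : nat) := iter n (mmul M) mI.
Definition mtr (M : mat) := m11 M + m22 M.
Definition mdet (M : mat) := m11 M * m22 M - m12 M * m21 M.
Definition vdet (u v : vec) := u.1 * v.2 - u.2 * v.1.

Lemma mat_eq (M P : mat) : m11 M = m11 P -> m12 M = m12 P -> m21 M = m21 P -> m22 M = m22 P -> M = P.
Proof. by case: M; case: P => /= ? ? ? ? ? ? ? ? -> -> -> ->. Qed.

Lemma mappM M P v : mapp (mmul M P) v = mapp M (mapp P v).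
Proof. case: M P v => [a b c d] [e f g h] [x y]; rewrite /mapp /=; congr (_,_); ring. Qed.

Lemma mmulA M P Q : mmul M (mmul P Q) = mmul (mmul M P) Q.
Proof. case: M P Q => [a b c d] [e f g h] [i j k l]; apply: mat_eq => /=; ring. Qed.

Lemma mmul1l M : mmul mI M = M.
Proof. case: M => [a b c d]; apply: mat_eq => /=; ring. Qed.
Lemma mmul1r M : mmul M mI = M.
Proof. case: M => [a b c d]; apply: mat_eq => /=; ring. Qed.

Lemma mdetM M P : mdet (mmul M P) = mdet M * mdet P.
Proof. case: M P => [a b c d] [e f g h]; rewrite /mdet /=; ring. Qed.

Lemma vdet_mapp B u v : vdet (mapp B u) (mapp B v) = mdet B * vdet u v.
Proof. case: B u v => [a b c d] [x y] [z t]; rewrite /vdet /mdet /=; ring. Qed.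

Lemma mpowD M m n : mpow M (m + n) = mmul (mpow M m) (mpow M n).
Proof.
elim: m => [|m IH]; first by rewrite add0n /= mmul1l.
by rewrite addSn /mpow /= -/(mpow M (m + n)) IH mmulA.
Qed.

Lemma mpowS M n : mpow M n.+1 = mmul M (mpow M n).
Proof. by []. Qed.

Lemma mdet_pow M n : mdet (mpow M n) = mdet M ^+ n.
Proof. elim: n => [|n IH]; first by rewrite /mdet /=; ring. by rewrite mpowS mdetM IH exprS. Qed.

Lemma mtr_rec M P : mtr (mmul M (mmul M P)) = mtr M * mtr (mmul M P) - mdet M * mtr P.
Proof. case: M P => [a b c d] [e f g h]; rewrite /mtr /mdet /=; ring. Qed.

Lemma mneg_sq M : mmul (mneg M) (mneg M) = mmul M M.
Proof. case: M => [a b c d]; apply: mat_eq => /=; ring. Qed.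

Lemma mpow_neg2 M n : mpow (mneg M) (n + n) = mpow M (n + n).
Proof.
elim: n => [|n IH] //.
by rewrite addSn addnS !mpowS IH !mmulA mneg_sq.
Qed.

Lemma mpowNN M N : mpow M N = mI -> mpow M (N + N) = mI.
Proof. by move=> h; rewrite mpowD h mmul1l. Qed.

Lemma det_unit M N : (0 < N)%N -> mpow M N = mI -> mdet M = 1 \/ mdet M = -1.
Proof.
move=> N0 h; have e := mdet_pow M N; rewrite h in e.
have e1 : `|mdet M| ^+ N = 1 by rewrite -normrX -e /mdet /=; lia.
move: e1 => /eqP; rewrite pexpr_eq1 // => /eqP e2.
lia.
Qed.

Lemma mtr_rec2 M k : mtr (mpow M k.+2) = mtr M * mtr (mpow M k.+1) - mdet M * mtr (mpow M k).
Proof. by rewrite !mpowS mtr_rec. Qed.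

Lemma mtr_pow0 M : mtr (mpow M 0) = 2.
Proof. by rewrite /mtr. Qed.
Lemma mtr_pow1 M : mtr (mpow M 1) = mtr M.
Proof. by rewrite mpowS /= mmul1r. Qed.

Lemma grow1 M K : mdet M = 1 -> 3 <= mtr M -> (0 < K)%N -> mpow M K <> mI.
Proof.
move=> hd ht K0 hK.
have cl : forall k, 2 <= mtr (mpow M k) /\ mtr (mpow M k) + 1 <= mtr (mpow M k.+1).
  elim=> [|k [IH1 IH2]]; first by rewrite mtr_pow0 mtr_pow1; lia.
  split; first lia.
  rewrite (mtr_rec2 M k) hd; nia.
case: K K0 hK => [//|k] _ hK.
have := cl k; rewrite hK /mtr /=; lia.
Qed.

Lemma grow2 M K : mdet M = -1 -> 1 <= mtr M -> (0 < K)%N -> mpow M K <> mI.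
Proof.
move=> hd ht K0 hK.
case: K K0 hK => [//|[|k]] _ hK.
  by move: hK; rewrite mpowS mmul1r => e; move: hd; rewrite e /mdet /=.
have cl : forall k, [/\ 1 <= mtr (mpow M k.+1), mtr (mpow M k.+1) + 1 <= mtr (mpow M k.+2)
                     & 3 <= mtr (mpow M k.+2)].
  elim=> [|j [IH1 IH2 IH3]].
    rewrite mtr_rec2 mtr_pow0 mtr_pow1 hd; split; nia.
  split; [lia| |]; rewrite (mtr_rec2 M j.+1) hd; nia.
have [_ _] := cl k; rewrite hK /mtr /=; lia.
Qed.

Lemma parab M K : mdet M = 1 -> mtr M = 2 -> (0 < K)%N -> mpow M K = mI -> M = mI.
Proof.
case: M => [a b c d]; rewrite /mdet /mtr /= => hd ht K0 hK.
have cl : forall k : nat, mpow (Mat a b c d) k =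
   Mat (1 + k%:Z * (a - 1)) (k%:Z * b) (k%:Z * c) (1 + k%:Z * (d - 1)).
  elim=> [|k IH]; first by apply: mat_eq => /=; lia.
  have H1 : k%:Z * (b * c) = k%:Z * (a * d - 1) by rewrite -hd; ring.
  have H2 : k%:Z * a * (a + d) = k%:Z * a * 2 by rewrite ht.
  have H3 : k%:Z * d * (a + d) = k%:Z * d * 2 by rewrite ht.
  have H4 : k%:Z * b * (a + d) = k%:Z * b * 2 by rewrite ht.
  have H5 : k%:Z * c * (a + d) = k%:Z * c * 2 by rewrite ht.
  rewrite mpowS IH; apply: mat_eq => /=; lia.
move: hK; rewrite cl => e.
have e1 : 1 + K%:Z * (a - 1) = 1 by rewrite -[RHS]/(m11 mI) -e.
have e2 : K%:Z * b = 0 by rewrite -[RHS]/(m12 mI) -e.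
have e3 : K%:Z * c = 0 by rewrite -[RHS]/(m21 mI) -e.
apply: mat_eq => /=; nia.
Qed.

Lemma mnegK M : mneg (mneg M) = M.
Proof. case: M => [a b c d]; apply: mat_eq => /=; ring. Qed.

Lemma classify M N : (0 < N)%N -> mpow M N = mI -> M <> mI -> M <> mneg mI ->
  (mdet M = 1 /\ mtr M * mtr M <= 1) \/ (mdet M = -1 /\ mtr M = 0).
Proof.
move=> N0 hN h1 h2.
have hN2 : mpow (mneg M) (N + N) = mI by rewrite mpow_neg2 mpowNN.
have N20 : (0 < N + N)%N by rewrite addn_gt0 N0.
have dn : mdet (mneg M) = mdet M by rewrite /mdet /=; ring.
have tn : mtr (mneg M) = - mtr M by rewrite /mtr /=; ring.
case: (det_unit N0 hN) => hd.
  left; split => //.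
  have [t3|t3] : 3 <= mtr M \/ mtr M <= 2 by lia.
    by case: (grow1 hd t3 N0 hN).
  have [t3'|t3'] : mtr M <= -3 \/ -2 <= mtr M by lia.
    by case: (@grow1 (mneg M) (N + N)); rewrite ?dn ?tn //; lia.
  have [t2|t2] : mtr M = 2 \/ mtr M <= 1 by lia.
    by case: h1; apply: (parab hd t2 N0 hN).
  have [t2'|t2'] : mtr M = -2 \/ -1 <= mtr M by lia.
    case: h2; rewrite -(mnegK M); congr mneg.
    by apply: (@parab _ (N + N)); rewrite ?dn ?tn //; lia.
  nia.
right; split => //.
have [t3|t3] : 1 <= mtr M \/ mtr M <= 0 by lia.
  by case: (grow2 hd t3 N0 hN).
have [t3'|t3'] : mtr M <= -1 \/ 0 <= mtr M by lia.
  by case: (@grow2 (mneg M) (N + N)); rewrite ?dn ?tn //; lia.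
lia.
Qed.

End MatM.
Import MatM.

Module QM.
Import Order.TTheory GRing.Theory Num.Theory.
Local Open Scope ring_scope.

Lemma abs_le_sq (x : int) : `|x| <= x * x.
Proof. nia. Qed.

Lemma abs_mul_le (a x K : int) : `|x| <= K -> `|a * x| <= `|a| * K.
Proof. by move=> h; rewrite normrM ler_wpM2l. Qed.

Lemma abs_le_mul (a x : int) : a != 0 -> `|x| <= `|a * x|.
Proof. move=> a0; rewrite normrM; have : 1 <= `|a| by lia. nia. Qed.

Lemma qboundA (a b c d C : int) : a * d - b * c = 1 -> (a + d) * (a + d) <= 1 ->
  exists K, forall x y : int, `|x * (c * x + d * y) - y * (a * x + b * y)| <= C ->
     `|x| <= K /\ `|y| <= K.
Proof.
move=> hd ht.
have c0 : c != 0 by apply/eqP => c0; rewrite c0 in hd; nia.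
exists (4 * `|c| * C + (`|d| + `|a|) * (4 * `|c| * C)) => x y hQ.
set Q := x * (c * x + d * y) - y * (a * x + b * y) in hQ.
set X := 2 * c * x + (d - a) * y.
have iden : 4 * c * Q = X * X + (4 - (a + d) * (a + d)) * (y * y).
  have e : 4 * c * Q = X * X + (4 * (a * d - b * c) - (a + d) * (a + d)) * (y * y).
    rewrite /Q /X; ring.
  by rewrite e hd mulr1.
have hP : `|4 * c * Q| <= 4 * `|c| * C.
  rewrite -mulrA (normrM 4) normrM; have : `|Q| * `|c| <= C * `|c| by apply: ler_wpM2r.
  rewrite /= ; lia.
have hX : X * X <= 4 * `|c| * C.
  have : 0 <= (4 - (a + d) * (a + d)) * (y * y) by nia.
  lia.
have hy : y * y <= 4 * `|c| * C.
  have : (y * y) <= (4 - (a + d) * (a + d)) * (y * y) by nia.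
  have : 0 <= X * X by nia.
  lia.
have ay := abs_le_sq y; have aX := abs_le_sq X.
have h2 : `|(d - a) * y| <= `|d - a| * (4 * `|c| * C) by apply: abs_mul_le; lia.
have h3 : `|x| <= `|2 * c * x| by apply: abs_le_mul; lia.
have h4 : 2 * c * x = X - (d - a) * y by rewrite /X; ring.
have T0 : 0 <= 4 * `|c| * C by lia.
have h5 : `|d - a| * (4 * `|c| * C) <= (`|d| + `|a|) * (4 * `|c| * C).
  by apply: ler_wpM2r => //; lia.
have h6 : 0 <= (`|d| + `|a|) * (4 * `|c| * C) by apply: mulr_ge0 => //; lia.
split; lia.
Qed.

Lemma qboundB (a b c d C : int) : a * d - b * c = -1 -> a + d = 0 ->
  exists K, forall x y : int, x * (c * x + d * y) - y * (a * x + b * y) != 0 ->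
     `|x * (c * x + d * y) - y * (a * x + b * y)| <= C ->
     `|x| <= K /\ `|y| <= K.
Proof.
move=> hd ht.
have dE : d = - a by lia.
subst d.
have [c0|c0] := eqVneq c 0.
  subst c.
  have a2 : a * a = 1 by lia.
  exists (C + `|b| * C) => x y Q0 hQ.
  have e : x * (0 * x + - a * y) - y * (a * x + b * y) = - (y * (2 * a * x + b * y)) by ring.
  rewrite e normrN in hQ; rewrite e oppr_eq0 mulf_eq0 negb_or in Q0.
  case/andP: Q0 => y0 W0.
  have hy : `|y| <= C.
    apply: le_trans hQ; rewrite normrM; have : 1 <= `|2 * a * x + b * y| by lia.
    nia.
  have hW : `|2 * a * x + b * y| <= C.
    apply: le_trans hQ; rewrite normrM; have : 1 <= `|y| by lia.
    nia.
  have h3 : `|x| <= `|2 * a * x| by apply: abs_le_mul; lia.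
  have h4 : `|b * y| <= `|b| * C by apply: abs_mul_le.
  have : 0 <= `|b| * C by apply: mulr_ge0 => //; lia.
  split; lia.
exists (`|c| * C + `|a + 1| * (`|c| * C)) => x y Q0 hQ.
set Q := x * (c * x + - a * y) - y * (a * x + b * y) in Q0 hQ *.
set U := c * x - (a + 1) * y.
set V := c * x - (a - 1) * y.
have iden : c * Q = U * V.
  have e : c * Q = U * V + (1 - a * a - b * c) * (y * y) by rewrite /Q /U /V; ring.
  have z : 1 - a * a - b * c = 0 by lia.
  by rewrite e z mul0r addr0.
have UV0 : U * V != 0 by rewrite -iden mulf_neq0.
have U0 : U != 0 by apply: contraNneq UV0 => ->; rewrite mul0r.
have V0 : V != 0 by apply: contraNneq UV0 => ->; rewrite mulr0.
have hcQ : `|U * V| <= `|c| * C by rewrite -iden normrM ler_wpM2l.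
have hU : `|U| <= `|c| * C.
  apply: le_trans hcQ; rewrite normrM; have : 1 <= `|V| by lia.
  nia.
have hV : `|V| <= `|c| * C.
  apply: le_trans hcQ; rewrite normrM; have : 1 <= `|U| by lia.
  nia.
have hy : `|y| <= `|c| * C by rewrite /U /V in hU hV; lia.
have h3 : `|x| <= `|c * x| by apply: abs_le_mul.
have h4 : `|(a + 1) * y| <= `|a + 1| * (`|c| * C) by apply: abs_mul_le.
have h5 : 0 <= `|a + 1| * (`|c| * C) by apply: mulr_ge0 => //; lia.
rewrite /U in hU.
split; lia.
Qed.

Lemma qbound M C : (mdet M = 1 /\ mtr M * mtr M <= 1) \/ (mdet M = -1 /\ mtr M = 0) ->
  exists K, forall w : vec, vdet w (mapp M w) != 0 -> `|vdet w (mapp M w)| <= C ->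
     `|w.1| <= K /\ `|w.2| <= K.
Proof.
case: M => [a b c d]; rewrite /mdet /mtr /= => -[[hd ht]|[hd ht]].
  have [K HK] := qboundA C hd ht.
  by exists K => -[x y] _ hQ; apply: HK.
have [K HK] := qboundB C hd ht.
by exists K => -[x y] hQ0 hQ; apply: HK.
Qed.

Lemma lin_bound (al be x y K : int) : `|x| <= K -> `|y| <= K ->
  `|al * x + be * y| <= (`|al| + `|be|) * K.
Proof.
move=> hx hy; apply: le_trans (ler_normD _ _) _.
have := abs_mul_le al hx; have := abs_mul_le be hy.
rewrite mulrDl; lia.
Qed.

Lemma scalar_case M N : (0 < N)%N -> mpow M N = mI -> M <> mI -> M <> mneg mI ->
  exists v0 : vec, vdet v0 (mapp M v0) != 0.
Proof.
move=> N0 hN h1 h2.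
have hdu := det_unit N0 hN.
case: M hN h1 h2 hdu => [a b c d] hN h1 h2 hdu.
have [c0|c0] := eqVneq c 0; last first.
  by exists (1, 0); rewrite /vdet /mapp /=; apply/eqP => e; move/eqP: c0; apply; lia.
have [b0|b0] := eqVneq b 0; last first.
  by exists (0, 1); rewrite /vdet /mapp /=; apply/eqP => e; move/eqP: b0; apply; lia.
have [ad|ad] := eqVneq a d; last first.
  by exists (1, 1); rewrite /vdet /mapp /=; apply/eqP => e; move/eqP: ad; apply; lia.
subst b c d; rewrite /mdet /= in hdu.
have : a = 1 \/ a = -1 by nia.
case=> e; subst a; exfalso; [apply: h1 | apply: h2]; by apply: mat_eq.
Qed.

Lemma cramer B M (v0 u : vec) :
  let D0 := vdet v0 (mapp M v0) in
  D0 * (mapp B u).1 = vdet u (mapp M v0) * (mapp B v0).1 + vdet v0 u * (mapp B (mapp M v0)).1 /\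
  D0 * (mapp B u).2 = vdet u (mapp M v0) * (mapp B v0).2 + vdet v0 u * (mapp B (mapp M v0)).2.
Proof.
case: B M v0 u => [a b c d] [e f g h] [x y] [z t]; rewrite /vdet /mapp /=; split; ring.
Qed.

Definition mabs (M : mat) := `|m11 M| + `|m12 M| + `|m21 M| + `|m22 M|.

Lemma mapp_bound M (w : vec) K : `|w.1| <= K -> `|w.2| <= K ->
  `|(mapp M w).1| <= mabs M * K /\ `|(mapp M w).2| <= mabs M * K.
Proof.
move=> h1 h2; have K0 : 0 <= K by lia.
have ha := lin_bound (m11 M) (m12 M) h1 h2.
have hb := lin_bound (m21 M) (m22 M) h1 h2.
rewrite /mapp /= /mabs; split.
  apply: le_trans ha _; apply: ler_wpM2r => //; lia.
apply: le_trans hb _; apply: ler_wpM2r => //; lia.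
Qed.

Lemma le4a (a b c d : int) : `|a| + `|b| <= `|a| + `|b| + `|c| + `|d|.
Proof. lia. Qed.
Lemma le4b (a b c d : int) : `|c| + `|d| <= `|a| + `|b| + `|c| + `|d|.
Proof. lia. Qed.

Lemma matbound M M' (N : nat) (s : int) : (0 < N)%N -> mpow M N = mI -> mpow M' N = mI ->
  M <> mI -> M <> mneg mI -> s != 0 ->
  exists K, forall B B', mmul B M = mmul M' B -> mmul B' B = msc s ->
   [/\ `|m11 B| <= K, `|m12 B| <= K, `|m21 B| <= K & `|m22 B| <= K].
Proof.
move=> N0 hM hM' h1 h2 s0.
have key : forall eps, (eps = 1 \/ eps = -1) -> M' = Mat eps 0 0 eps ->
    forall B B', mmul B M = mmul M' B -> mmul B' B = msc s -> False.
  move=> eps heps -> B B' e1 e2.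
  have e3 : mmul (mmul B' B) M = mmul (mmul B' B) (Mat eps 0 0 eps).
    rewrite -!mmulA e1; congr mmul; case: B {e1 e2} => [a b c d]; apply: mat_eq => /=; ring.
  rewrite e2 in e3.
  have e4 : M = Mat eps 0 0 eps.
    move: e3; case: (M) => [a b c d] e3; apply: mat_eq => /=;
    have := congr1 m11 e3; have := congr1 m12 e3; have := congr1 m21 e3; have := congr1 m22 e3;
    rewrite /= => q1 q2 q3 q4; apply: (mulfI s0); lia.
  by case: heps => he; subst eps; [apply: h1 | apply: h2].
case: (classic (M' = mI)) => [e|n1].
  by exists 0 => B B' e1 e2; case: (key 1 (or_introl erefl) e B B' e1 e2).
case: (classic (M' = mneg mI)) => [e|n2].
  have e' : M' = Mat (-1) 0 0 (-1) by rewrite e; apply: mat_eq => /=; ring.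
  by exists 0 => B B' e1 e2; case: (key (-1) (or_intror erefl) e' B B' e1 e2).
have cl := classify N0 hM' n1 n2.
have [v0 D0] := scalar_case N0 hM h1 h2.
set D := vdet v0 (mapp M v0) in D0.
have [K1 HK1] := qbound (s * s * `|D|) cl.
set Kw := K1 + mabs M' * K1.
set al1 := vdet (1, 0) (mapp M v0); set be1 := vdet v0 (1, 0).
set al2 := vdet (0, 1) (mapp M v0); set be2 := vdet v0 (0, 1).
exists ((`|al1| + `|be1| + `|al2| + `|be2|) * Kw) => B B' e1 e2.
have hdet : mdet B' * mdet B = s * s.
  by rewrite -mdetM e2 /mdet /=; ring.
have dB0 : mdet B != 0 by apply/eqP => z; move: hdet; rewrite z mulr0 => /esym/eqP; rewrite mulf_eq0 (negbTE s0).
have dB'0 : mdet B' != 0 by apply/eqP => z; move: hdet; rewrite z mul0r => /esym/eqP; rewrite mulf_eq0 (negbTE s0).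
set w := mapp B v0.
have hw : vdet w (mapp M' w) = mdet B * D.
  by rewrite /w -mappM -e1 mappM vdet_mapp.
have hdB : `|mdet B| <= s * s.
  have : `|mdet B| <= `|mdet B' * mdet B| by apply: abs_le_mul.
  by rewrite hdet; move=> h; apply: le_trans h _; lia.
have [hw1 hw2] : `|w.1| <= K1 /\ `|w.2| <= K1.
  apply: HK1; rewrite hw; first by rewrite mulf_neq0.
  rewrite normrM; apply: ler_wpM2r => //.
have K10 : 0 <= K1 by lia.
have [hm1 hm2] := mapp_bound M' hw1 hw2.
have MK0 : 0 <= mabs M' * K1 by apply: mulr_ge0 => //; rewrite /mabs; lia.
have hw1' : `|w.1| <= Kw by rewrite /Kw; lia.
have hw2' : `|w.2| <= Kw by rewrite /Kw; lia.
have hm1' : `|(mapp M' w).1| <= Kw by rewrite /Kw; lia.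
have hm2' : `|(mapp M' w).2| <= Kw by rewrite /Kw; lia.
have BM : mapp B (mapp M v0) = mapp M' w by rewrite /w -!mappM e1.
have [c11 c21] := cramer B M v0 (1, 0).
have [c12 c22] := cramer B M v0 (0, 1).
rewrite -/D BM -/w in c11 c21 c12 c22.
have Kw0 : 0 <= Kw by lia.
have b11 := lin_bound al1 be1 hw1' hm1'.
have b21 := lin_bound al1 be1 hw2' hm2'.
have b12 := lin_bound al2 be2 hw1' hm1'.
have b22 := lin_bound al2 be2 hw2' hm2'.
rewrite -/al1 -/be1 -/al2 -/be2 in c11 c21 c12 c22.
rewrite -c11 in b11; rewrite -c21 in b21; rewrite -c12 in b12; rewrite -c22 in b22.
have a11 : `|m11 B| <= `|D * m11 B| by apply: abs_le_mul.
have a21 : `|m21 B| <= `|D * m21 B| by apply: abs_le_mul.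
have a12 : `|m12 B| <= `|D * m12 B| by apply: abs_le_mul.
have a22 : `|m22 B| <= `|D * m22 B| by apply: abs_le_mul.
have E11 : (mapp B (1, 0)).1 = m11 B by rewrite /mapp /=; ring.
have E21 : (mapp B (1, 0)).2 = m21 B by rewrite /mapp /=; ring.
have E12 : (mapp B (0, 1)).1 = m12 B by rewrite /mapp /=; ring.
have E22 : (mapp B (0, 1)).2 = m22 B by rewrite /mapp /=; ring.
rewrite E11 in b11; rewrite E21 in b21; rewrite E12 in b12; rewrite E22 in b22.
have q1 : (`|al1| + `|be1|) * Kw <= (`|al1| + `|be1| + `|al2| + `|be2|) * Kw.
  by apply: ler_wpM2r => //; apply: le4a.
have q2 : (`|al2| + `|be2|) * Kw <= (`|al1| + `|be1| + `|al2| + `|be2|) * Kw.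
  by apply: ler_wpM2r => //; apply: le4b.
split.
- exact: le_trans a11 (le_trans b11 q1).
- exact: le_trans a12 (le_trans b12 q2).
- exact: le_trans a21 (le_trans b21 q1).
- exact: le_trans a22 (le_trans b22 q2).
Qed.

End QM.
Import QM.

Module Main1M.
Import Order.TTheory GRing.Theory Num.Theory.

Definition vscale (k : int) (v : vec) : vec := ((k * v.1)%R, (k * v.2)%R).
Definition additive2 (f : vec -> vec) := forall p q, f (zadd2 p q) = zadd2 (f p) (f q).
Definition matof (f : vec -> vec) : mat :=
  Mat (f (1, 0)%R).1 (f (0, 1)%R).1 (f (1, 0)%R).2 (f (0, 1)%R).2.

Section Additive.
Local Open Scope ring_scope.
Variable f : vec -> vec.
Hypothesis hf : additive2 f.

Lemma add2_0 : f (0, 0) = (0, 0).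
Proof.
have := hf (0, 0) (0, 0); rewrite /zadd2 /= !addr0.
case: (f (0, 0)) => x y [] e1 e2.
have -> : x = 0 by lia.
have -> : y = 0 by lia.
done.
Qed.

Lemma add2_N p : f (- p.1, - p.2) = (- (f p).1, - (f p).2).
Proof.
have := hf p (- p.1, - p.2); rewrite /zadd2 /= !subrr add2_0.
case: (f (- p.1, - p.2)) => x y [] e1 e2.
congr (_, _); lia.
Qed.

Lemma add2_nat (n : nat) p : f (vscale n%:Z p) = vscale n%:Z (f p).
Proof.
elim: n => [|n IH].
  by rewrite /vscale /= !mul0r add2_0.
have e : vscale n.+1%:Z p = zadd2 p (vscale n%:Z p).
  by rewrite /vscale /zadd2 /=; congr (_, _); lia.
rewrite e hf IH /vscale /zadd2 /=; congr (_, _); lia.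
Qed.

Lemma add2_int (k : int) p : f (vscale k p) = vscale k (f p).
Proof.
case: k => n; first exact: add2_nat.
have e : vscale (Negz n) p = (- (vscale n.+1%:Z p).1, - (vscale n.+1%:Z p).2).
  by rewrite /vscale /=; congr (_, _); rewrite NegzE; ring.
rewrite e add2_N add2_nat /vscale /=; congr (_, _); rewrite NegzE; ring.
Qed.

Lemma add2_lin v : f v = mapp (matof f) v.
Proof.
case: v => x y.
have e : ((x, y) : vec) = zadd2 (vscale x (1, 0)) (vscale y (0, 1)).
  by rewrite /zadd2 /vscale /=; congr (_, _); ring.
rewrite e hf !add2_int /zadd2 /vscale /mapp /matof /=; congr (_, _); ring.
Qed.
End Additive.

Lemma matof_mapp M : matof (mapp M) = M.
Proof. case: M => a b c d; apply: mat_eq; rewrite /= ; ring. Qed.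

Lemma matof_ext f g : f =1 g -> matof f = matof g.
Proof. by move=> e; rewrite /matof !e. Qed.

Lemma mapp_additive M : additive2 (mapp M).
Proof. move=> [x y] [z t]; rewrite /mapp /zadd2 /=; congr (_, _); ring. Qed.

Lemma mapp_pow M k v : mapp (mpow M k) v = iter k (mapp M) v.
Proof.
elim: k => [|k IH]; first by rewrite /mapp /=; case: v => x y /=; congr (_, _); ring.
by rewrite mpowS mappM IH.
Qed.

End Main1M.
Import Main1M.

Module CountM.

Lemma count_inj (T U : eqType) (P : pred T) (G : T -> U) (s : seq T) (t : seq U) :
  uniq s -> {in s &, injective G} -> (forall x, x \in s -> P x -> G x \in t) ->
  count P s <= size t.
Proof.
move=> us inj sub.
rewrite -size_filter -(size_map G).
apply: uniq_leq_size.
  rewrite map_inj_in_uniq ?filter_uniq //.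
  by move=> x y; rewrite !mem_filter => /andP [_ xs] /andP [_ ys]; apply: inj.
move=> y /mapP [x]; rewrite mem_filter => /andP [px xs] ->; exact: sub.
Qed.

Lemma size_le_fibers (T U : eqType) (F : T -> U) (C : nat) (s : seq T) :
  (forall y, count (fun x => F x == y) s <= C) -> size s <= C * size (undup (map F s)).
Proof.
move=> hc.
suff H : forall u s, (forall y, count (fun x => F x == y) s <= C) ->
   (forall x, x \in s -> F x \in u) -> size s <= C * size u.
  by apply: H => // x xs; rewrite mem_undup; apply: map_f.
clear hc; elim=> [|y u IH] {}s hc' hin.
  by case: s hc' hin => [//|x s] _ /(_ x (mem_head _ _)).
have e := count_predC (fun x => F x == y) s.
rewrite -e.
have h1 := hc' y.
have h2 : size (filter (predC (fun x => F x == y)) s) <= C * size u.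
  apply: IH.
    move=> z; rewrite count_filter; apply: leq_trans (hc' z).
    by apply: sub_count => x /andP [].
  move=> x; rewrite mem_filter => /andP [/= nxy xs].
  by have := hin x xs; rewrite in_cons (negbTE nxy).
rewrite size_filter in h2; rewrite /= mulnS; exact: leq_add.
Qed.

Local Open Scope fset_scope.

Lemma card_fset_le (T : choiceType) (X : set T) (t : seq T) :
  (forall x, X x -> x \in t) -> (#|` fset_set X| <= size t)%N.
Proof.
move=> sub.
have fX : finite_set X.
  apply: (@sub_finite_set _ _ [set` t]); last exact: finite_seq.
  by move=> x /sub.
apply: (@leq_trans #|` [fset x in t]|); last by rewrite card_fseq size_undup.
apply: fsubset_leq_card; apply/fsubsetP => x.
by rewrite in_fset_set // inE => /sub xt; rewrite inE.
Qed.

Lemma card_fset_ge (T : choiceType) (X : set T) (t : seq T) :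
  finite_set X -> uniq t -> (forall x, x \in t -> X x) -> (size t <= #|` fset_set X|)%N.
Proof.
move=> fX ut sub.
rewrite -(undup_id ut) -card_fseq.
apply: fsubset_leq_card; apply/fsubsetP => x.
by rewrite inE => /sub xX; rewrite in_fset_set // inE.
Qed.

Lemma finite_sub_seq (T : choiceType) (X : set T) (t : seq T) :
  (forall x, X x -> x \in t) -> finite_set X.
Proof.
move=> sub; apply: (@sub_finite_set _ _ [set` t]); last exact: finite_seq.
by move=> x /sub.
Qed.

Import Order.TTheory GRing.Theory Num.Theory.

Definition rng (B : nat) : seq int := [seq (Posz k - Posz B)%R | k <- iota 0 (2 * B + 1)].

Lemma size_rng B : size (rng B) = (2 * B + 1)%N.
Proof. by rewrite size_map size_iota. Qed.

Lemma mem_rng B (x : int) : (`|x| <= Posz B)%R -> x \in rng B.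
Proof.
move=> h; apply/mapP; exists `|(x + Posz B)%R|%N.
  rewrite mem_iota /=; lia.
lia.
Qed.

Definition boxl (B : nat) : seq (int * int) := [seq (i, j) | i <- rng B, j <- rng B].

Lemma size_boxl B : size (boxl B) = ((2 * B + 1) * (2 * B + 1))%N.
Proof. by rewrite size_allpairs size_rng. Qed.

Lemma mem_boxl B (p : int * int) : (`|p.1| <= Posz B)%R -> (`|p.2| <= Posz B)%R -> p \in boxl B.
Proof. case: p => i j /= hi hj; apply: allpairs_f; exact: mem_rng. Qed.

Definition dom (n : nat) : seq (int * int) :=
  [seq (Posz i, Posz j) | i <- iota 0 n.+1, j <- iota 0 n.+1].

Lemma dom_uniq n : uniq (dom n).
Proof.
apply: allpairs_uniq; try exact: iota_uniq.
by move=> [a b] [c d] _ _ /= [-> ->].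
Qed.

Lemma size_dom n : size (dom n) = (n.+1 * n.+1)%N.
Proof. by rewrite size_allpairs size_iota. Qed.

Lemma mem_dom n (v : int * int) : v \in dom n ->
  exists i j, [/\ (i <= n)%N, (j <= n)%N & v = (Posz i, Posz j)].
Proof.
case/allpairsP => -[i j] [hi hj ->]; exists i, j.
move: hi hj; rewrite -/(iota 0 n.+1) !mem_iota !add0n !ltnS => hi hj; by split.
Qed.


Lemma mem_flatten_In (T : Type) (U V : eqType) (R : seq T) (P : seq U) (F : T -> U -> V) r p :
  List.In r R -> p \in P -> F r p \in flatten [seq [seq F r' p' | p' <- P] | r' <- R].
Proof.
elim: R => [//|r0 R IH] /= h pP; rewrite mem_cat.
case: h => [<-|h]; first by rewrite map_f.
by rewrite IH ?orbT.
Qed.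

Lemma size_flatten_const (T U V : Type) (R : seq T) (P : seq U) (F : T -> U -> V) :
  size (flatten [seq [seq F r' p' | p' <- P] | r' <- R]) = (size R * size P)%N.
Proof. elim: R => [//|r R IH] /=; by rewrite size_cat IH size_map mulSn. Qed.

End CountM.
Import CountM.

Module Main2M.
Import Order.TTheory GRing.Theory Num.Theory.

Section Main.
Variable G : group.
Variable A : set G.
Hypothesis hN : is_normal A.
Variable phi : vec -> G.
Hypothesis phiM : forall p q, phi (zadd2 p q) = gmul (phi p) (phi q).
Hypothesis phi_inj : injective phi.
Hypothesis phiA : forall x, A x <-> exists p, phi p = x.

Local Notation "x * y" := (gmul x y).
Local Notation "x ^-1" := (ginv x).

Lemma A1 : A gone. Proof. by have [[h1 [h2 h3]] h4] := hN. Qed.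
Lemma AM x y : A x -> A y -> A (x * y). Proof. by have [[h1 [h2 h3]] h4] := hN; apply: h2. Qed.
Lemma AV x : A x -> A (x^-1). Proof. by have [[h1 [h2 h3]] h4] := hN; apply: h3. Qed.
Lemma Aconj h x : A x -> A (h^-1 * x * h). Proof. by have [[h1 [h2 h3]] h4] := hN; apply: h4. Qed.
Lemma Aphi p : A (phi p). Proof. by apply/phiA; exists p. Qed.
Lemma Apow x n : A x -> A (gpow x n).
Proof. move=> ax; elim: n => [|n IH] /=; [exact: A1 | exact: AM]. Qed.


Lemma phi0 : phi (0, 0)%R = gone.
Proof.
apply: (@gmul_cancl _ (phi (0,0)%R)); rewrite -phiM gmul1r /zadd2 /= addr0 //.
Qed.

Lemma phiN p : phi (- p.1, - p.2)%R = ginv (phi p).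
Proof.
apply: ginv_uniq; rewrite -phiM /zadd2 /= !subrr; exact: phi0.
Qed.

Lemma phiC p q : phi p * phi q = phi q * phi p.
Proof. by rewrite -!phiM /zadd2 addrC [(p.2 + _)%R]addrC. Qed.

Lemma phi_pow (n : nat) p : phi (vscale n%:Z p) = gpow (phi p) n.
Proof.
elim: n => [|n IH] /=.
  by rewrite /vscale !mul0r phi0.
have e : vscale n.+1%:Z p = zadd2 p (vscale n%:Z p).
  by rewrite /vscale /zadd2 /=; congr (_, _); lia.
by rewrite e phiM IH.
Qed.

Lemma phiinv_ex x : exists p, A x -> phi p = x.
Proof.
case: (classic (A x)) => [/phiA [p e]|nA]; first by exists p.
by exists (0, 0)%R.
Qed.

Definition phiinv x := proj1_sig (constructive_indefinite_description _ (phiinv_ex x)).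

Lemma phiinvK x : A x -> phi (phiinv x) = x.
Proof. rewrite /phiinv; case: constructive_indefinite_description => p /= h; exact: h. Qed.

Lemma phiK p : phiinv (phi p) = p.
Proof. by apply: phi_inj; rewrite phiinvK //; apply: Aphi. Qed.

Definition cj (h : G) (p : vec) : vec := phiinv (h^-1 * phi p * h).

Lemma phi_cj h p : phi (cj h p) = h^-1 * phi p * h.
Proof. by rewrite /cj phiinvK //; apply: Aconj; apply: Aphi. Qed.

Lemma cj_add h : additive2 (cj h).
Proof.
move=> p q; apply: phi_inj; rewrite phiM !phi_cj phiM.
by rewrite -!gmulA gmulKVl.
Qed.

Lemma cjM h1 h2 p : cj (h1 * h2) p = cj h2 (cj h1 p).
Proof.
apply: phi_inj; rewrite !phi_cj ginvM; by rewrite !gmulA.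
Qed.

Lemma cjA a p : A a -> cj a p = p.
Proof.
move=> /phiA [q <-]; apply: phi_inj; rewrite phi_cj -gmulA phiC gmulKl //.
Qed.

Lemma cj_pow x k p : cj (gpow x k) p = iter k (cj x) p.
Proof.
elim: k p => [|k IH] p /=.
  by apply: phi_inj; rewrite phi_cj ginv1 gmul1l gmul1r.
by rewrite cjM IH -iterSr.
Qed.

Definition CM h := matof (cj h).

Lemma mapp_CM h p : mapp (CM h) p = cj h p.
Proof. by rewrite -add2_lin //; apply: cj_add. Qed.

Lemma CM_pow_id x N : A (gpow x N) -> mpow (CM x) N = mI.
Proof.
move=> ax.
rewrite -(matof_mapp (mpow (CM x) N)) -(matof_mapp mI); apply: matof_ext => v.
rewrite mapp_pow.
have -> : iter N (mapp (CM x)) v = iter N (cj x) v.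
  by elim: N {ax} => //= n ->; rewrite mapp_CM.
rewrite -cj_pow cjA //; case: v => a b; rewrite /mapp /=; congr (_, _); ring.
Qed.

Lemma CM_coset r a : A a -> CM (r * a) = CM r.
Proof. by move=> ha; apply: matof_ext => p; rewrite cjM cjA. Qed.


Variable R : seq G.
Hypothesis hR : forall g, exists2 r, List.In r R & exists2 a, A a & g = r * a.

Lemma In_nth (T : Type) (x0 r : T) (l : seq T) : List.In r l -> exists j, (j < size l)%N /\ nth x0 l j = r.
Proof.
elim: l => [//|y l IH] /= [->|h]; first by exists 0%N.
by have [j [lj e]] := IH h; exists j.+1.
Qed.

Lemma exists_k x : exists k, (0 < k <= size R)%N /\ A (gpow x k).
Proof.
set m := size R.
have H : forall i : 'I_m.+1, exists j : 'I_m, exists2 a, A a & gpow x i = nth gone R j * a.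
  move=> i; have [r rR [a aA e]] := hR (gpow x i).
  have [j [jm ej]] := In_nth gone rR.
  by exists (Ordinal jm); exists a => //=; rewrite ej.
pose f i := proj1_sig (constructive_indefinite_description _ (H i)).
have fP : forall i : 'I_m.+1, exists2 a, A a & gpow x i = nth gone R (f i) * a.
  by move=> i; rewrite /f; case: constructive_indefinite_description.
have ninj : ~ injective f.
  move=> inj; have := leq_card f inj; rewrite !card_ord ltnn //.
have [i1 [i2 [e12 n12]]] : exists i1 i2, f i1 = f i2 /\ i1 <> i2.
  apply: NNPP => hn; apply: ninj => a b e; apply: NNPP => nab; apply: hn; by exists a, b.
have key : forall a b : 'I_m.+1, f a = f b -> (a < b)%N -> exists k, (0 < k <= size R)%N /\ A (gpow x k).
  move=> a b e ab; exists (b - a)%N; split.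
    by rewrite subn_gt0 ab /=; have := ltn_ord b; rewrite ltnS => hb; apply: leq_trans (leq_subr _ _) hb.
  have [a1 A1' e1] := fP a; have [a2 A2' e2] := fP b.
  have ee : gpow x b = gpow x a * gpow x (b - a) by rewrite -gpowD subnKC // ltnW.
  have -> : gpow x (b - a) = (gpow x a)^-1 * gpow x b by rewrite ee gmulKl.
  rewrite e1 e2 e ginvM -gmulA gmulKl; apply: AM => //; exact: AV.
have [lt|lt|eq] := ltngtP i1 i2.
- exact: (key i1 i2 e12 lt).
- by apply: (key i2 i1) => //; rewrite e12.
- by case: n12; apply: val_inj.
Qed.

Lemma exists_N : exists N, (0 < N)%N /\ forall x, A (gpow x N).
Proof.
exists (size R)`!; split; first exact: fact_gt0.
move=> x; have [k [/andP [k0 km] ak]] := exists_k x.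
have /dvdnP [d ->] : (k %| (size R)`!)%N by apply: dvdn_fact; rewrite k0.
by rewrite mulnC gpowM; apply: Apow.
Qed.

Definition Bf (f : G -> G) (N : nat) (p : vec) : vec := phiinv (f (phi (vscale N%:Z p))).

Section Aut.
Variable N : nat.
Hypothesis hNA : forall x, A (gpow x N).
Variable f : G -> G.
Hypothesis hf : is_hom f.

Lemma phi_Bf p : phi (Bf f N p) = f (phi (vscale N%:Z p)).
Proof. by rewrite /Bf phiinvK // phi_pow (hom_pow hf). Qed.

Lemma Bf_add : additive2 (Bf f N).
Proof.
move=> p q; apply: phi_inj; rewrite phiM !phi_Bf -hf -phiM; congr (f (phi _)).
by rewrite /vscale /zadd2 /=; congr (_, _); ring.
Qed.

Lemma Bf_cj g p : Bf f N (cj g p) = cj (f g) (Bf f N p).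
Proof.
apply: phi_inj; rewrite phi_Bf phi_cj phi_Bf -(add2_nat (cj_add g)) phi_cj.
by rewrite !hf (homV hf).
Qed.

End Aut.

Lemma Bf_inv N f f' p : (forall x, A (gpow x N)) -> is_hom f -> is_hom f' -> cancel f f' ->
  Bf f' N (Bf f N p) = vscale (N * N)%:Z p.
Proof.
move=> hNA hf hf' c; apply: phi_inj; rewrite (phi_Bf hNA hf') //.
rewrite phi_pow (phi_Bf hNA hf) -(hom_pow hf) c -phi_pow.
congr phi.
by rewrite /vscale /=; congr (_, _); rewrite PoszM; ring.
Qed.

Lemma inv_hom (f f' : G -> G) : is_hom f -> cancel f f' -> cancel f' f -> is_hom f'.
Proof. by move=> hf c1 c2 x y; rewrite -{1}(c2 x) -{1}(c2 y) -hf c1. Qed.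

Lemma fin_bound (T : Type) (P : T -> int -> Prop) (l : seq T) :
  (forall x K K', P x K -> (K <= K')%R -> P x K') ->
  (forall x, List.In x l -> exists K, P x K) -> exists K, forall x, List.In x l -> P x K.
Proof.
move=> mono; elim: l => [|y l IH] H; first by exists 0%R.
have [K1 h1] := H y (or_introl erefl).
have [K2 h2] := IH (fun x hx => H x (or_intror hx)).
exists (`|K1| + `|K2|)%R => x /= [<-|hx].
  by apply: mono h1 _; lia.
by apply: mono (h2 x hx) _; lia.
Qed.

Lemma mat_ext_fun X Y : (forall v, mapp X v = mapp Y v) -> X = Y.
Proof. by move=> e; rewrite -(matof_mapp X) -(matof_mapp Y); apply: matof_ext. Qed.

Definition mbounded (B : mat) (K : int) :=
  [/\ (`|m11 B| <= K)%R, (`|m12 B| <= K)%R, (`|m21 B| <= K)%R & (`|m22 B| <= K)%R].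

Lemma Bbound N g : (0 < N)%N -> (forall x, A (gpow x N)) -> CM g <> mI -> CM g <> mneg mI ->
  exists K : int, forall f, is_aut f -> mbounded (matof (Bf f N)) K.
Proof.
move=> N0 hNA h1 h2.
have hM := CM_pow_id (hNA g).
pose P r K := forall B B', mmul B (CM g) = mmul (CM r) B -> mmul B' B = msc (Posz (N * N)) ->
   mbounded B K.
have [K HK] : exists K, forall r, List.In r R -> P r K.
  apply: fin_bound.
    move=> r K K' h le B B' e1 e2; have [q1 q2 q3 q4] := h B B' e1 e2.
    by split; apply: le_trans le.
  move=> r _.
  have s0 : Posz (N * N) != 0%R by rewrite -lt0n muln_gt0 N0.
  have [K HK] := matbound N0 hM (CM_pow_id (hNA r)) h1 h2 s0.
  by exists K.
exists K => f [hf [f' c1 c2]].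
have hf' := inv_hom hf c1 c2.
have [r rR [a aA e]] := hR (f g).
apply: (HK r rR _ (matof (Bf f' N))).
  rewrite -(CM_coset r aA) -e; apply: mat_ext_fun => v.
  rewrite !mappM !mapp_CM -!add2_lin; try exact: (Bf_add hNA hf).
  exact: (Bf_cj hNA hf).
apply: mat_ext_fun => v.
rewrite mappM -!add2_lin; try exact: (Bf_add hNA hf); try exact: (Bf_add hNA hf').
rewrite (Bf_inv _ hNA hf hf' c1) /vscale /mapp /=; congr (_, _); ring.
Qed.

Lemma letter_step (s r : G) : exists r' q, List.In r' R /\ s * r = r' * phi q.
Proof.
have [r' rR [a aA e]] := hR (s * r).
have [q eq] := (phiA a).1 aA.
by exists r', q; rewrite e eq.
Qed.

Lemma cover (S : seq G) : exists K0 Kc : nat, forall n x, in_ball S n x ->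
  exists r (p : vec), [/\ List.In r R, (`|p.1| <= Posz (K0 + n * Kc))%R,
                  (`|p.2| <= Posz (K0 + n * Kc))%R & x = r * phi p].
Proof.
pose P1 (t r : G) (K : int) := exists r' (q : vec), [/\ List.In r' R, (`|q.1| <= K)%R, (`|q.2| <= K)%R & t * r = r' * phi q].
have P1mono : forall t r K K', P1 t r K -> (K <= K')%R -> P1 t r K'.
  move=> t r K K' [r' [q [h1 h2 h3 h4]]] le; exists r', q; split => //; exact: le_trans le.
have P1ex : forall t r, exists K, P1 t r K.
  move=> t r; have [r' [q [h1 h2]]] := letter_step t r.
  by exists (`|q.1| + `|q.2|)%R, r', q; split => //; lia.
have [K HK] : exists K, forall t, List.In t S -> forall r, List.In r R -> P1 t r K /\ P1 (t^-1) r K.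
  apply: (fin_bound (P := fun t K => forall r, List.In r R -> P1 t r K /\ P1 (t^-1) r K)).
    move=> t K K' h le r rR; have [h1 h2] := h r rR; split; exact: P1mono le.
  move=> t _.
  apply: (fin_bound (P := fun r K => P1 t r K /\ P1 (t^-1) r K)).
    by move=> r K K' [h1 h2] le; split; apply: P1mono le.
  move=> r _; have [K1 h1] := P1ex t r; have [K2 h2] := P1ex (t^-1) r.
  by exists (`|K1| + `|K2|)%R; split; [apply: P1mono h1 _ | apply: P1mono h2 _]; lia.
have [r0 r0R [a0 a0A e0]] := hR gone.
have [q0 eq0] := (phiA a0).1 a0A.
exists (`|q0.1| + `|q0.2|)%N, `|K|%N.
have main : forall l, List.Forall (gen_letter S) l -> exists r (p : vec), [/\ List.In r R,
     (`|p.1| <= Posz ((`|q0.1| + `|q0.2|) + size l * `|K|))%R,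
     (`|p.2| <= Posz ((`|q0.1| + `|q0.2|) + size l * `|K|))%R & word_value l = r * phi p].
  elim=> [|s l IH] hl.
    by exists r0, q0; split => //=; [lia | lia | rewrite eq0 -e0].
  inversion hl as [|s' l' hs hl' e]; subst.
  have [r [p [rR hp1 hp2 ev]]] := IH hl'.
  have [t tS st] := hs.
  have [h1 h2] := HK t tS r rR.
  have [r' [q [r'R hq1 hq2 eq]]] : P1 s r K by case: st => ->.
  exists r', (zadd2 q p); split => //=.
  - rewrite /zadd2 /=; lia.
  - rewrite /zadd2 /=; lia.
  - by rewrite ev gmulA eq -gmulA -phiM.
move=> n x [l [hl [sl ev]]].
have [r [p [rR hp1 hp2 e]]] := main l hl.
exists r, p; split => //; [apply: le_trans hp1 _ | apply: le_trans hp2 _ | by rewrite -ev].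
  by rewrite lez_nat leq_add2l leq_mul2r sl orbT.
by rewrite lez_nat leq_add2l leq_mul2r sl orbT.
Qed.

Definition Orb (S : seq G) n := [set O : set G | exists x, in_ball S n x /\ O = aut_orbit x]%classic.

Lemma orb_cover (S : seq G) : exists K0 Kc : nat, forall n O, Orb S n O ->
  O \in flatten [seq [seq aut_orbit (r * phi p) | p <- boxl (K0 + n * Kc)] | r <- R].
Proof.
have [K0 [Kc H]] := cover S.
exists K0, Kc => n O [x [bx ->]].
have [r [p [rR h1 h2 ->]]] := H n x bx.
by apply: mem_flatten_In => //; apply: mem_boxl.
Qed.

Lemma orb_finite (S : seq G) n : finite_set (Orb S n).
Proof.
have [K0 [Kc H]] := orb_cover S.
by apply: finite_sub_seq => O /H; apply.
Qed.

Lemma upper (S : seq G) : exists lam, (0 < lam)%N /\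
  forall n, (aut_growth S n <= lam * (lam * n + lam) ^ 2 + lam)%N.
Proof.
have [K0 [Kc H]] := orb_cover S.
set D := (2 * K0 + 2 * Kc + 1)%N.
exists (size R * (D * D) + 1)%N; split; first by rewrite addn1.
move=> n.
have h0 : (aut_growth S n <= size R * ((2 * (K0 + n * Kc) + 1) * (2 * (K0 + n * Kc) + 1)))%N.
  rewrite -size_boxl -(size_flatten_const R (boxl (K0 + n * Kc)) (fun r p => aut_orbit (r * phi p))).
  by apply: card_fset_le => O /H.
apply: leq_trans h0 _.
set lam := (size R * (D * D) + 1)%N.
have h1 : (2 * (K0 + n * Kc) + 1 <= D * n.+1)%N by rewrite /D; nia.
have h2 : ((2 * (K0 + n * Kc) + 1) * (2 * (K0 + n * Kc) + 1) <= (D * D) * (n.+1 * n.+1))%N.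
  by rewrite mulnACA; apply: leq_mul.
have h3 : (size R * (D * D) <= lam)%N by rewrite /lam leq_addr.
have h4 : (n.+1 <= lam * n + lam)%N.
  have : (1 <= lam)%N by rewrite /lam addn1.
  nia.
apply: leq_trans (leq_addr _ _).
apply: (@leq_trans (size R * ((D * D) * (n.+1 * n.+1)))).
  by apply: leq_mul.
rewrite mulnA expnS expn1.
apply: leq_mul => //.
by apply: leq_mul.
Qed.

Lemma id_aut : is_aut (fun x : G => x).
Proof. by split; [move=> x y | exists (fun x => x)]. Qed.

Lemma vscale_inj (N : nat) : (0 < N)%N -> injective (vscale (Posz N)).
Proof.
move=> N0 [a b] [c d] [e1 e2]; congr (_, _).
  by apply: (@mulfI _ (Posz N)) => //; rewrite -lt0n.
by apply: (@mulfI _ (Posz N)) => //; rewrite -lt0n.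
Qed.

Lemma fiber_bound N K (x0 : vec) (s : seq vec) : (0 < N)%N -> (forall x, A (gpow x N)) ->
  (forall f, is_aut f -> mbounded (matof (Bf f N)) K) -> uniq s ->
  (count (fun v => aut_orbit (phi (vscale (Posz N) v)) == aut_orbit (phi (vscale (Posz N) x0))) s
    <= size (boxl `|K|) * size (boxl `|K|))%N.
Proof.
move=> N0 hNA hK us.
rewrite -(size_allpairs (fun q1 q2 : vec => mapp (Mat q1.1 q1.2 q2.1 q2.2) x0)).
apply: (count_inj (G := vscale (Posz N))) => //.
  by move=> v w _ _; apply: vscale_inj.
move=> v vs /eqP e.
have : aut_orbit (phi (vscale (Posz N) x0)) (phi (vscale (Posz N) v)).
  by rewrite -e; exists (fun x => x); split => //; exact: id_aut.
case=> f [af ef].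
have hf : is_hom f by case: af.
have eB : Bf f N x0 = vscale (Posz N) v by rewrite /Bf ef phiK.
rewrite -eB (add2_lin (Bf_add hNA hf)).
have [b1 b2 b3 b4] := hK f af.
set B := matof (Bf f N) in b1 b2 b3 b4 *.
have -> : B = Mat (m11 B, m12 B).1 (m11 B, m12 B).2 (m21 B, m22 B).1 (m21 B, m22 B).2 by case: (B).
have KK : (K <= Posz `|K|)%R by lia.
apply: (allpairs_f (fun q1 q2 : vec => mapp (Mat q1.1 q1.2 q2.1 q2.2) x0)); apply: mem_boxl => /=;
  by apply: le_trans KK.
Qed.

Lemma phi_dom (N i j : nat) : phi (vscale (Posz N) (Posz i, Posz j)) =
  gpow (phi (1, 0)%R) (N * i) * gpow (phi (0, 1)%R) (N * j).
Proof.
rewrite -!phi_pow -phiM; congr phi.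
by rewrite /vscale /zadd2 /=; congr (_, _); rewrite !PoszM; ring.
Qed.

Lemma lower (S : seq G) g : generates S -> CM g <> mI -> CM g <> mneg mI ->
  exists lam, (0 < lam)%N /\ forall n, (n ^ 2 <= lam * aut_growth S (lam * n + lam) + lam)%N.
Proof.
move=> gS h1 h2.
have [N [N0 hNA]] := exists_N.
have [K hK] := Bbound N0 hNA h1 h2.
have [l1 b1] := gS (phi (1, 0)%R).
have [l2 b2] := gS (phi (0, 1)%R).
set C := (size (boxl `|K|) * size (boxl `|K|))%N.
exists (C + N * (l1 + l2) + 1)%N; split; first by rewrite addn1.
move=> n; set lam := (C + N * (l1 + l2) + 1)%N.
pose F (v : vec) := aut_orbit (phi (vscale (Posz N) v)).
have hc : forall y, (count (fun v => F v == y) (dom n) <= C)%N.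
  move=> y; case: (boolP (has (fun v => F v == y) (dom n))) => [/hasP [x0 _ /eqP <-]|nh].
    exact: (@fiber_bound N K x0 (dom n) N0 hNA hK (dom_uniq n)).
  by move: nh; rewrite has_count -leqNgt leqn0 => /eqP ->.
have h1' := size_le_fibers hc.
have hu : (size (undup (map F (dom n))) <= aut_growth S (lam * n + lam))%N.
  apply: card_fset_ge; first exact: orb_finite.
    exact: undup_uniq.
  move=> O; rewrite mem_undup => /mapP [v vd ->].
  have [i [j [hi hj ->]]] := mem_dom vd.
  exists (phi (vscale (Posz N) (Posz i, Posz j))); split => //.
  rewrite phi_dom.
  apply: (in_ball_mono _ (in_ball_mul (in_ball_pow (N * i) b1) (in_ball_pow (N * j) b2))).
  have : (N * i * l1 + N * j * l2 <= N * n * (l1 + l2))%N.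
    nia.
  move=> h; apply: leq_trans h _; rewrite /lam.
  have : (N * n * (l1 + l2) <= (C + N * (l1 + l2) + 1) * n)%N.
    nia.
  move=> h'; apply: leq_trans h' (leq_addr _ _).
rewrite size_dom in h1'.
have e : (n ^ 2 <= n.+1 * n.+1)%N by rewrite expnS expn1 leq_mul.
apply: leq_trans e _; apply: leq_trans h1' _.
apply: leq_trans (leq_addr _ _).
apply: leq_mul => //.
by rewrite /lam -addnA leq_addr.
Qed.

Lemma ball_int (S : seq G) (e : vec) (k : int) : List.In (phi e) S ->
  exists m, in_ball S m (phi (vscale k e)).
Proof.
move=> eS.
have l1 : in_ball S 1 (phi e) by apply: in_ball_letter; exists (phi e) => //; left.
have l2 : in_ball S 1 ((phi e)^-1) by apply: in_ball_letter; exists (phi e) => //; right.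
case: k => n.
  by exists (n * 1)%N; rewrite phi_pow; apply: in_ball_pow.
exists (n.+1 * 1)%N.
have -> : vscale (Negz n) e = (- (vscale (Posz n.+1) e).1, - (vscale (Posz n.+1) e).2)%R.
  by rewrite /vscale /=; congr (_, _); rewrite NegzE; ring.
by rewrite phiN phi_pow ginv_pow; apply: in_ball_pow.
Qed.

Lemma gen_S0 : generates (R ++ [:: phi (1, 0)%R; phi (0, 1)%R]).
Proof.
set S0 := R ++ _.
move=> x; have [r rR [a aA e]] := hR x.
have [[p1 p2] ep] := (phiA a).1 aA.
have e1 : List.In (phi (1, 0)%R) S0 by apply: List.in_or_app; right; left.
have e2 : List.In (phi (0, 1)%R) S0 by apply: List.in_or_app; right; right; left.
have [m1 b1] := ball_int p1 e1.
have [m2 b2] := ball_int p2 e2.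
have br : in_ball S0 1 r by apply: in_ball_letter; exists r; [apply: List.in_or_app; left | left].
exists (1 + (m1 + m2))%N.
have -> : x = r * (phi (vscale p1 (1, 0)%R) * phi (vscale p2 (0, 1)%R)).
  rewrite e -ep -phiM; congr (_ * phi _).
  by rewrite /vscale /zadd2 /=; congr (_, _); ring.
by apply: in_ball_mul => //; apply: in_ball_mul.
Qed.

Lemma final_in g : (exists2 a, A a & g^-1 * a * g <> a) ->
  (exists2 a, A a & g^-1 * a * g <> a^-1) -> quadratic_aut_growth G.
Proof.
move=> [a aA na] [b bA nb].
have [p ep] := (phiA a).1 aA.
have [q eq] := (phiA b).1 bA.
have h1 : CM g <> mI.
  move=> e; apply: na; rewrite -ep -phi_cj -mapp_CM e; congr phi.
  by case: p {ep} => x y; rewrite /mapp /=; congr (_, _); ring.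
have h2 : CM g <> mneg mI.
  move=> e; apply: nb; rewrite -eq -phi_cj -mapp_CM e -phiN; congr phi.
  by case: q {eq} => x y; rewrite /mapp /=; congr (_, _); ring.
split; first by exists (R ++ [:: phi (1, 0)%R; phi (0, 1)%R]); exact: gen_S0.
move=> S gS; split.
  by have [lam [l0 hl]] := upper S; exists lam; split.
by have [lam [l0 hl]] := lower gS h1 h2; exists lam; split.
Qed.
End Main.


End Main2M.
Import Main2M.

Theorem mainTheorem10 (G : group) (A : set G) :
  is_normal A -> finite_index A -> iso_Z2 A ->
  (exists g : G,
     (exists2 a, A a & gmul (gmul (ginv g) a) g <> a) /\
     (exists2 a, A a & gmul (gmul (ginv g) a) g <> ginv a)) ->
  quadratic_aut_growth G.
Proof.
move=> hN [R hR] [phi [phiM [phi_inj phiA]]] [g [h1 h2]].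
exact: (final_in hN phiM phi_inj phiA hR h1 h2).
Qed.
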